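(* Let $n\ge 2$ and let $\mathcal{G}\subseteq 2^{[n]}$ be an IU-family, i.e. $G\cap G'\neq\emptyset$ and $G\cup G'\neq[n]$ for all $G,G'\in\mathcal{G}$. Then $\beta(\mathcal{G})\le 2^{n-4}$.
   Context: $[n]=\{1,\dots,n\}$ and $2^{[n]}$ is the family of all subsets of $[n]$. For $\mathcal{F}\subseteq 2^{[n]}$ and distinct $i,j\in[n]$, let $\mathcal{F}(i,\bar{j})=\{F\setminus\{i\}: F\in\mathcal{F},\ F\cap\{i,j\}=\{i\}\}$. The sturdiness of $\mathcal{F}$ is $\beta(\mathcal{F})=\min_{1\le i\neq j\le n}|\mathcal{F}(i,\bar{j})|$. *)

(* Defs.v *)
From mathcomp Require Import all_boot.
Set Implicit Arguments. Unset Strict Implicit. Unset Printing Implicit Defensive.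

Definition section_ij (n : nat) (F : {set {set 'I_n}}) (i j : 'I_n) : {set {set 'I_n}} :=
  [set G :\ i | G in F & (G :&: [set i; j]) == [set i]].

(* sturdiness: min over ordered pairs i <> j of |F(i, \bar j)|.
   The default 2^n of the min is never reached for n >= 2 (pairs exist)
   and is an upper bound for every |F(i,\bar j)| anyway. *)
Definition sturdiness (n : nat) (F : {set {set 'I_n}}) : nat :=
  \big[minn/2 ^ n]_(p : 'I_n * 'I_n | p.1 != p.2) #|section_ij F p.1 p.2|.

Definition IU_family (n : nat) (F : {set {set 'I_n}}) : Prop :=
  forall G G', G \in F -> G' \in F -> G :&: G' != set0 /\ G :|: G' != setT.

(* Main.v *)
Require Import Defs.
From mathcomp Require Import all_boot.
From mathcomp Require Import zify.
Set Implicit Arguments. Unset Strict Implicit. Unset Printing Implicit Defensive.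

Lemma bigmin_le (I : eqType) (r : seq I) (P : pred I) (F : I -> nat) x i0 :
  i0 \in r -> P i0 -> \big[minn/x]_(i <- r | P i) F i <= F i0.
Proof.
elim: r => [//|a r IH]; rewrite in_cons big_cons => /orP [/eqP <-|ir] Pi.
  by rewrite Pi geq_minl.
case: (P a); last exact: IH.
exact: leq_trans (geq_minr _ _) (IH ir Pi).
Qed.

Lemma arith K w0 w1 u0 u1 d0 d1 : K*w0 <= u0*d0 -> K*w1 <= u1*d1 -> u0<=u1 -> d1<=d0 ->
  2*K*(w0+w1) <= (u0+u1)*(d0+d1).
Proof.
move=> h1 h2 h3 h4.
have : (u1 - u0) * (d0 - d1) >= 0 by [].
nia.
Qed.

Lemma final_arith N a b c u d v w : 0 < N -> a <= w -> c + v <= N -> v + w = u + d ->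
  N * w <= u * d -> u <= N -> d <= N -> b <= a -> b <= c -> 4 * b <= N.
Proof.
move=> N0 aw cv vw Nw uN dN ba bc.
set p := N - u; set q := N - d.
have Np : N = u + p by rewrite /p subnKC.
have Nq : N = d + q by rewrite /q subnKC.
have e1 : N * N = u * d + u * q + p * d + p * q.
  by rewrite {1}Np {1}Nq mulnDl !mulnDr !addnA.
have e2 : N * u = u * d + u * q by rewrite Nq mulnDl [d * u]mulnC [q * u]mulnC.
have e3 : N * d = u * d + p * d by rewrite Np mulnDl.
have e4 : N * v + N * w = N * u + N * d by rewrite -!mulnDr vw.
have e5 : N * c + N * v <= N * N by rewrite -mulnDr leq_mul2l cv orbT.
have h1 : N * c <= p * q by lia.
have h2 : (N * c) * (N * w) <= (p * q) * (u * d) by apply: leq_mul.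
have h3 : 4 * (u * p) <= N ^ 2 by rewrite Np; exact: (nat_AGM2 u p).
have h4 : 4 * (d * q) <= N ^ 2 by rewrite Nq; exact: (nat_AGM2 d q).
have h5 : (N ^ 2) * (16 * (w * c)) <= (N ^ 2) * (N ^ 2).
  have h := leq_mul h3 h4.
  have E1 : 4 * (u * p) * (4 * (d * q)) = 16 * ((p * q) * (u * d)) by nia.
  have E2 : (N ^ 2) * (16 * (w * c)) = 16 * ((N * c) * (N * w)) by nia.
  by rewrite E2; apply: leq_trans h; rewrite E1 leq_mul2l h2 orbT.
rewrite leq_pmul2l ?expn_gt0 ?N0 // in h5.
have h6 : b * b <= w * c by apply: leq_mul => //; apply: leq_trans aw.
rewrite -(leq_sqr (4 * b)); apply: leq_trans h5.
have E3 : (4 * b) ^ 2 = 16 * (b * b) by nia.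
by rewrite E3 leq_mul2l h6 orbT.
Qed.

Section Cube.
Variable T : finType.
Definition cube (L S : {set T}) := [set X : {set T} | X :\: S == L].

Lemma cube_split (P : {set {set T}}) (L S : {set T}) (x : T) : x \in S -> x \notin L ->
  #|P :&: cube L S| = #|P :&: cube L (S :\ x)| + #|P :&: cube (x |: L) (S :\ x)|.
Proof.
move=> xS xL.
rewrite -(cardsID [set X : {set T} | x \in X] (P :&: cube L S)) addnC.
have -> : P :&: cube L S :\: [set X : {set T} | x \in X] = P :&: cube L (S :\ x).
  apply/setP => X; rewrite !inE.
  case: (X \in P); rewrite ?andbF //=.
  case xX: (x \in X) => /=.
    apply/esym/negbTE/negP => /eqP E; move/setP: E => /(_ x).
    by rewrite !inE eqxx xX (negbTE xL).
  suff -> : X :\: (S :\ x) = X :\: S by [].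
  apply/setP => y; rewrite !inE; case: (eqVneq y x) => [->|] /=; by rewrite ?xX ?andbF.
congr (_ + _).
have -> : P :&: cube L S :&: [set X : {set T} | x \in X] = P :&: cube (x |: L) (S :\ x).
  apply/setP => X; rewrite !inE.
  case: (X \in P); rewrite ?andbF //=.
  case xX: (x \in X); rewrite ?andbF ?andbT /=; last first.
    apply/esym/negbTE/negP => /eqP E; move/setP: E => /(_ x).
    by rewrite !inE eqxx xX.
  apply/idP/idP => /eqP E; apply/eqP/setP => y; move/setP: E => /(_ y);
    rewrite !inE; case: (eqVneq y x) => [->|] //=; by rewrite xS (negbTE xL).
by [].
Qed.

Definition upc (U : {set {set T}}) := forall X Y : {set T}, X \subset Y -> X \in U -> Y \in U.
Definition dnc (U : {set {set T}}) := forall X Y : {set T}, Y \subset X -> X \in U -> Y \in U.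

Lemma cube_notin (L S : {set T}) (x : T) (X : {set T}) : x \notin S -> x \notin L -> X \in cube L S -> x \notin X.
Proof.
move=> xS xL; rewrite inE => /eqP E; apply/negP => xX; move/setP: E => /(_ x).
by rewrite !inE xX (negbTE xS) (negbTE xL).
Qed.

Lemma up_mono (U : {set {set T}}) (L S : {set T}) (x : T) : upc U -> x \notin S -> x \notin L ->
  #|U :&: cube L S| <= #|U :&: cube (x |: L) S|.
Proof.
move=> hU xS xL.
rewrite -(@card_in_imset _ _ (fun X => x |: X)); last first.
  move=> X Y; rewrite !inE => /andP [_ hX] /andP [_ hY] E.
  have nX := cube_notin xS xL (X := X); have nY := cube_notin xS xL (X := Y).
  rewrite !inE in nX nY.
  by rewrite -(setU1K (nX hX)) -(setU1K (nY hY)) E.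
apply: subset_leq_card; apply/subsetP => Z /imsetP [X]; rewrite !inE => /andP [XU /eqP E] ->.
rewrite (hU X) ?subsetUr //=; apply/eqP/setP => y; move/setP: E => /(_ y).
rewrite !inE; case: (eqVneq y x) => [->|] //=; by rewrite (negbTE xS).
Qed.

Lemma dn_mono (U : {set {set T}}) (L S : {set T}) (x : T) : dnc U -> x \notin S -> x \notin L ->
  #|U :&: cube (x |: L) S| <= #|U :&: cube L S|.
Proof.
move=> hU xS xL.
have inX : forall X, X \in cube (x |: L) S -> x \in X.
  move=> X; rewrite inE => /eqP /setP /(_ x); rewrite !inE eqxx.
  by case/andP.
rewrite -(@card_in_imset _ _ (fun X => X :\ x)); last first.
  move=> X Y; rewrite !inE => /andP [_ hX] /andP [_ hY] E.
  have := inX X; have := inX Y; rewrite !inE => iY iX.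
  by rewrite -(setD1K (iX hX)) -(setD1K (iY hY)) E.
apply: subset_leq_card; apply/subsetP => Z /imsetP [X]; rewrite !inE => /andP [XU /eqP E] ->.
rewrite (hU X) ?subD1set //=; apply/eqP/setP => y; move/setP: E => /(_ y).
rewrite !inE; case: (eqVneq y x) => [->|] //=.
by rewrite andbF (negbTE xL).
Qed.

Lemma disj_of (A B : {set T}) : (forall y, y \in A -> y \in B -> False) -> [disjoint A & B].
Proof.
move=> H; rewrite -setI_eq0; apply/eqP/setP => y; rewrite !inE.
by apply/negbTE/negP => /andP [h1 h2]; apply: (H y).
Qed.

Lemma HK (U D : {set {set T}}) : upc U -> dnc D -> forall k (S L : {set T}),
  #|S| = k -> [disjoint L & S] ->
  2 ^ k * #|U :&: D :&: cube L S| <= #|U :&: cube L S| * #|D :&: cube L S|.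
Proof.
move=> hU hD; elim => [|k IH] S L hS hLS.
  move/cards0_eq: hS => ->.
  case: (set_0Vmem (U :&: D :&: cube L set0)) => [->|[X XW]]; first by rewrite cards0 muln0.
  have W1 : #|U :&: D :&: cube L set0| <= 1.
    rewrite -(cards1 L); apply: subset_leq_card; apply/subsetP => Y; rewrite !inE setD0.
    by case/andP => _ ->.
  move: XW; rewrite !inE => /andP [/andP [XU XD] XC].
  have h1 : 0 < #|U :&: cube L set0| by apply/card_gt0P; exists X; rewrite !inE XU.
  have h2 : 0 < #|D :&: cube L set0| by apply/card_gt0P; exists X; rewrite !inE XD.
  rewrite expn0 mul1n; apply: (leq_trans W1); by rewrite muln_gt0 h1 h2.
have [x xS] : exists x, x \in S.
  by apply/set0Pn; rewrite -card_gt0 hS.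
have xL : x \notin L.
  apply/negP => xL; move: hLS; rewrite -setI_eq0 => /eqP /setP /(_ x).
  by rewrite !inE xL xS.
have hS' : #|S :\ x| = k by move: hS; rewrite (cardsD1 x) xS add1n => -[].
have xS' : x \notin S :\ x by rewrite !inE eqxx.
have d1 : [disjoint L & S :\ x].
  apply: disj_of => y yL; rewrite !inE => /andP [_ yS].
  by move: hLS; rewrite -setI_eq0 => /eqP /setP /(_ y); rewrite !inE yL yS.
have d2 : [disjoint x |: L & S :\ x].
  apply: disj_of => y; rewrite !inE => /orP [/eqP ->|yL]; first by rewrite eqxx.
  move=> /andP [_ yS].
  by move: hLS; rewrite -setI_eq0 => /eqP /setP /(_ y); rewrite !inE yL yS.
rewrite !(cube_split _ xS xL).
have I1 := IH _ _ hS' d1.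
have I2 := IH _ _ hS' d2.
have M1 := up_mono hU xS' xL.
have M2 := dn_mono hD xS' xL.
rewrite expnS; exact: arith I1 I2 M1 M2.
Qed.

Lemma cube_card : forall k (S L : {set T}), #|S| = k -> [disjoint L & S] ->
  #|cube L S| = 2 ^ k.
Proof.
elim => [|k IH] S L hS hLS.
  move/cards0_eq: hS => ->; rewrite expn0 -(cards1 L).
  by rewrite (_ : cube L set0 = [set L]) //; apply/setP => X; rewrite !inE setD0.
have [x xS] : exists x, x \in S.
  by apply/set0Pn; rewrite -card_gt0 hS.
have xL : x \notin L.
  apply/negP => xL; move: hLS; rewrite -setI_eq0 => /eqP /setP /(_ x).
  by rewrite !inE xL xS.
have hS' : #|S :\ x| = k by move: hS; rewrite (cardsD1 x) xS add1n => -[].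
have d1 : [disjoint L & S :\ x].
  apply: disj_of => y yL; rewrite !inE => /andP [_ yS].
  by move: hLS; rewrite -setI_eq0 => /eqP /setP /(_ y); rewrite !inE yL yS.
have d2 : [disjoint x |: L & S :\ x].
  apply: disj_of => y; rewrite !inE => /orP [/eqP ->|yL]; first by rewrite eqxx.
  move=> /andP [_ yS].
  by move: hLS; rewrite -setI_eq0 => /eqP /setP /(_ y); rewrite !inE yL yS.
rewrite -(setTI (cube L S)) (cube_split _ xS xL) !setTI (IH _ _ hS' d1) (IH _ _ hS' d2).
by rewrite expnS mul2n addnn.
Qed.

End Cube.

Theorem theorem1p3 (n : nat) (G : {set {set 'I_n}}) :
  2 <= n -> IU_family G -> 16 * sturdiness G <= 2 ^ n.
Proof.
move=> n2 hG.
have h0 : 0 < n by apply: leq_trans n2.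
have h1 : 1 < n by [].
set i := Ordinal h0; set j := Ordinal h1.
have ij : i != j by [].
set S := ~: [set i; j].
set Q := cube [set i] S.
set A' := G :&: Q.
set B' := G :&: cube [set j] S.
set C := [set ~: F | F in B'].
have bA : sturdiness G <= #|A'|.
  have := @bigmin_le _ (index_enum _) (fun p : 'I_n * 'I_n => p.1 != p.2)
    (fun p => #|section_ij G p.1 p.2|) (2 ^ n) (i, j) (mem_index_enum _) ij.
  move/leq_trans; apply.
  apply: leq_trans (leq_imset_card _ _) _; apply: subset_leq_card.
  apply/subsetP => X; rewrite !inE /S setDE setCK.
  by [].
have bB : sturdiness G <= #|C|.
  have := @bigmin_le _ (index_enum _) (fun p : 'I_n * 'I_n => p.1 != p.2)
    (fun p => #|section_ij G p.1 p.2|) (2 ^ n) (j, i) (mem_index_enum _) (negbT (ltn_eqF (ltnSn 0))).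
  move/leq_trans; apply.
  apply: leq_trans (leq_imset_card _ _) _.
  rewrite /C card_imset; last by move=> ? ?; apply: setC_inj.
  apply: subset_leq_card.
  apply/subsetP => X; rewrite !inE /S setDE setCK /=.
  by rewrite [[set j; i]]setUC.
have upU : upc [set Y : {set 'I_n} | [exists a in A', a \subset Y]].
  move=> X Y XY; rewrite !inE => /existsP [a /andP [aA aX]].
  by apply/existsP; exists a; rewrite aA (subset_trans aX XY).
have dnD : dnc [set Y : {set 'I_n} | [exists a in A', Y \subset a]].
  move=> X Y XY; rewrite !inE => /existsP [a /andP [aA aX]].
  by apply/existsP; exists a; rewrite aA (subset_trans XY aX).
set U := [set Y : {set 'I_n} | [exists a in A', a \subset Y]].
set D := [set Y : {set 'I_n} | [exists a in A', Y \subset a]].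
have cS : #|S| = n - 2.
  have := cardsC [set i; j]; rewrite cards2 ij card_ord => E.
  rewrite /S; lia.
have dS : [disjoint [set i] & S].
  apply: disj_of => y; rewrite !inE => /eqP -> /norP [] /negP; by rewrite eqxx.
have HK1 := HK upU dnD cS dS.
have cQ := cube_card cS dS.
have AW : #|A'| <= #|U :&: D :&: Q|.
  apply: subset_leq_card; apply/subsetP => X XA; rewrite !inE.
  have XQ : X \in Q by move: XA; rewrite inE => /andP [].
  have XQ' := XQ; rewrite inE in XQ'; rewrite XQ' andbT.
  by apply/andP; split; apply/existsP; exists X; rewrite XA subxx.
have CQ : C \subset Q :\: (U :|: D).
  apply/subsetP => Y /imsetP [F]; rewrite inE => /andP [FG FQ] ->.
  rewrite inE; apply/andP; split; last first.
    move: FQ; rewrite !inE /S !setDE !setCK => /eqP E; apply/eqP/setP => y.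
    move/setP: E => /(_ y); rewrite !inE.
    case: (eqVneq y i) => [->|yi]; case: (eqVneq i j) ij => //= _ _.
      by case: (i \in F).
    case: (eqVneq y j) => [->|yj] /=; rewrite ?andbT ?andbF //.
    by move=> ->.
  rewrite /U /D !inE negb_or; apply/andP; split; apply/negP => /existsP [a /andP [aA aF]];
    have aG : a \in G by move: aA; rewrite inE => /andP [].
  - have [h _] := hG a F aG FG.
    by move: h; rewrite setI_eq0 disjoints_subset aF.
  - have [_ h] := hG a F aG FG.
    move: h; apply/negP; rewrite negbK; apply/eqP/setP => y; rewrite !inE.
    move/subsetP: aF => /(_ y); rewrite !inE; by case: (y \in F); case: (y \in a) => // ->.
have e1 := cardsUI (U :&: Q) (D :&: Q).
have e2 : (U :&: Q) :&: (D :&: Q) = U :&: D :&: Q.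
  by apply/setP => X; rewrite !(in_setI, in_setU); case: (X \in U); case: (X \in D); case: (X \in Q).
have e3 : (U :&: Q) :|: (D :&: Q) = Q :&: (U :|: D).
  by apply/setP => X; rewrite !(in_setI, in_setU); case: (X \in U); case: (X \in D); case: (X \in Q).
have e4 := cardsID (U :|: D) Q.
have e5 := subset_leq_card CQ.
rewrite e2 e3 in e1.
have n22 : 2 ^ n = 4 * 2 ^ (n - 2).
  by rewrite -{1}(subnK n2) expnD mulnC.
rewrite n22 (_ : 16 = 4 * 4) // -mulnA leq_mul2l /=.
apply: (final_arith (a := #|A'|) (c := #|C|) (u := #|U :&: Q|) (d := #|D :&: Q|)
  (v := #|Q :&: (U :|: D)|) (w := #|U :&: D :&: Q|)) => //.
- by rewrite expn_gt0.
- apply: leq_trans (eq_leq cQ); rewrite -/Q -e4 addnC leq_add2l; exact: e5.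
- by apply: leq_trans (eq_leq cQ); rewrite subset_leq_card // subsetIr.
- by apply: leq_trans (eq_leq cQ); rewrite subset_leq_card // subsetIr.
Qed.
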